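(* There exists a continuous, $2$-periodic matrix function $A:\mathbb{R}\to\mathbb{R}^{2\times 2}$, with positive off-diagonal entries and with principal eigenvalue equal to $-\tfrac12$ for every $t$, such that for every continuous function $a:[0,\infty)\to\mathbb{R}$ with $0<a(t)<\tfrac14$ for all $t\ge0$ (in particular for non-periodic ones, e.g. $a(t)=\tfrac1{16}(2+\sin t+\sin(\sqrt2\,t))$), the matrices $\hat A(t)=A(t)+a(t)I$ have positive off-diagonal entries and principal eigenvalue $-\tfrac12+a(t)<-\tfrac14$ for all $t\ge0$, and the system $y'=\hat A(t)y$ has a solution $v(t)$ with $\|v(2k)\|\to\infty$ as $k\to\infty$ ($k\in\mathbb{N}$).
   Context: A $2\times2$ real matrix with positive off-diagonal entries has two distinct real eigenvalues; the larger is called its principal eigenvalue. $I$ is the $2\times 2$ identity matrix and $\|\cdot\|$ the Euclidean norm on $\mathbb{R}^2$. *)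

(* Defs.v *)
From Stdlib Require Import Reals.
From mathcomp Require Import all_boot all_algebra.
From mathcomp Require Import Rstruct.

Set Implicit Arguments.
Unset Strict Implicit.
Unset Printing Implicit Defensive.

Definition i0 : 'I_2 := ord0.
Definition i1 : 'I_2 := ord_max.

Definition offdiag_pos (M : 'M[R]_2) : Prop :=
  (0 < M i0 i1)%R /\ (0 < M i1 i0)%R.

Definition principal_eigenvalue (M : 'M[R]_2) (l : R) : Prop :=
  eigenvalue M l /\ (forall m : R, eigenvalue M m -> (m <= l)%R).

Definition norm2 (v : 'cV[R]_2) : R :=
  sqrt (Rsqr (v i0 ord0) + Rsqr (v i1 ord0)).

Definition continuous_on_nonneg (f : R -> R) : Prop :=
  forall t, (0 <= t)%R -> forall eps, (0 < eps)%R ->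
    exists d, (0 < d)%R /\ forall s, (0 <= s)%R -> (Rabs (s - t) < d)%R ->
      (Rabs (f s - f t) < eps)%R.

Definition deriv_on_nonneg (f f' : R -> R) : Prop :=
  forall t, (0 <= t)%R -> forall eps, (0 < eps)%R ->
    exists d, (0 < d)%R /\ forall s, (0 <= s)%R -> s <> t -> (Rabs (s - t) < d)%R ->
      (Rabs ((f s - f t) / (s - t) - f' t) < eps)%R.

Definition solves_on_nonneg (B : R -> 'M[R]_2) (v : R -> 'cV[R]_2) : Prop :=
  forall i : 'I_2, deriv_on_nonneg (fun t => v t i ord0)
                                   (fun t => ((B t *m v t)%R i ord0)).

(* Main.v *)
Require Import Defs.
From Stdlib Require Import Reals Lra ZArith Lia.
From mathcomp Require Import all_boot all_algebra.
From mathcomp Require Import Rstruct.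
From Coquelicot Require Import Coquelicot.
Set Implicit Arguments. Unset Strict Implicit.

Open Scope R_scope.
Lemma R0E : (0%R : R) = 0. Proof. reflexivity. Qed.
Lemma R1E : (1%R : R) = 1. Proof. reflexivity. Qed.
Ltac toR := rewrite ?R0E ?R1E -?RminusE -?RplusE -?RmultE -?RoppE -?RdivE -?RinvE.

Lemma ord2_cases (i : 'I_2) : i = i0 \/ i = i1.
Proof.
case: i => [[|[|k]]] Hk.
- by left; apply/val_inj.
- by right; apply/val_inj.
- by [].
Qed.

Lemma ord1_eq (i : 'I_1) : i = ord0.
Proof. by apply/val_inj; case: i => [[|k]]. Qed.

Lemma mulmx_c0 (M : 'M[R]_2) (w : 'cV[R]_2) :
  (M *m w)%R i0 ord0 = M i0 i0 * w i0 ord0 + M i0 i1 * w i1 ord0.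
Proof.
rewrite mxE !big_ord_recr big_ord0 /=.
rewrite RplusE. rewrite GRing.add0r.
have -> : widen_ord (leqnSn 1) ord_max = i0 by apply/val_inj.
by have -> : (ord_max : 'I_2) = i1 by apply/val_inj.
Qed.

Lemma mulmx_c1 (M : 'M[R]_2) (w : 'cV[R]_2) :
  (M *m w)%R i1 ord0 = M i1 i0 * w i0 ord0 + M i1 i1 * w i1 ord0.
Proof.
rewrite mxE !big_ord_recr big_ord0 /=.
rewrite RplusE. rewrite GRing.add0r.
have -> : widen_ord (leqnSn 1) ord_max = i0 by apply/val_inj.
by have -> : (ord_max : 'I_2) = i1 by apply/val_inj.
Qed.

Lemma mulmx_r (w : 'rV[R]_2) (M : 'M[R]_2) j :
  (w *m M)%R ord0 j = w ord0 i0 * M i0 j + w ord0 i1 * M i1 j.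
Proof.
rewrite mxE !big_ord_recr big_ord0 /=.
rewrite RplusE. rewrite GRing.add0r.
have -> : widen_ord (leqnSn 1) ord_max = i0 by apply/val_inj.
by have -> : (ord_max : 'I_2) = i1 by apply/val_inj.
Qed.

Lemma scal_ii (a : R) (i : 'I_2) : (a%:M : 'M[R]_2)%R i i = a.
Proof. by rewrite mxE eqxx. Qed.
Lemma scal_01 (a : R) : (a%:M : 'M[R]_2)%R i0 i1 = 0.
Proof. by rewrite mxE. Qed.
Lemma scal_10 (a : R) : (a%:M : 'M[R]_2)%R i1 i0 = 0.
Proof. by rewrite mxE. Qed.

Lemma principal_lemma (M : 'M[R]_2) (l : R) :
  0 < M i0 i1 -> 0 < M i1 i0 ->
  (M i0 i0 - l) * (M i1 i1 - l) = M i0 i1 * M i1 i0 ->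
  M i0 i0 + M i1 i1 < 2 * l ->
  principal_eigenvalue M l.
Proof.
move=> H01 H10 Hdet Htr; split.
- apply/eigenvalueP.
  exists (\row_(j < 2) (if j == i0 then M i1 i0 else Ropp (Rminus (M i0 i0) l)))%R.
  + apply/matrixP => i j; rewrite (ord1_eq i) mulmx_r !mxE /=.
    have E1 : (i1 == i0) = false by [].
    rewrite -!RmultE.
    case: (ord2_cases j) => ->; rewrite /= ?E1; toR; nra.
  + apply/eqP => /matrixP /(_ ord0 i0); rewrite !mxE /= R0E; lra.
- move=> m /eigenvalueP [v Hv Hnz].
  have E0 : (v *m M)%R ord0 i0 = (m *: v)%R ord0 i0 by rewrite Hv.
  have E1 : (v *m M)%R ord0 i1 = (m *: v)%R ord0 i1 by rewrite Hv.
  move: E0 E1; rewrite !mulmx_r !mxE; toR => E0 E1.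
  set x := v ord0 i0 in E0 E1 Hnz *; set y := v ord0 i1 in E0 E1 Hnz *.
  have Hx : x <> 0.
  { move=> Hx0. have Hy : y = 0.
    { rewrite Hx0 in E1. apply: (Rmult_eq_reg_r (M i1 i0)); nra. }
    apply/negP: Hnz; apply/negPn/eqP; apply/matrixP => i j.
    rewrite (ord1_eq i) !mxE; case: (ord2_cases j) => ->; [exact Hx0| exact Hy]. }
  have Hy : y <> 0.
  { move=> Hy0. rewrite Hy0 in E1. apply: Hx. apply: (Rmult_eq_reg_r (M i0 i1)); nra. }
  have Hq : (M i0 i0 - m) * (M i1 i1 - m) = M i0 i1 * M i1 i0.
  { have h1 : x*(M i0 i0 - m) = -(y*M i1 i0) by lra.
    have h2 : y*(M i1 i1 - m) = -(x*M i0 i1) by lra.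
    apply: (Rmult_eq_reg_l (x*y)); last by apply: Rmult_integral_contrapositive; tauto.
    transitivity ((x*(M i0 i0 - m))*(y*(M i1 i1 - m))); first ring.
    rewrite h1 h2; ring. }
  apply/RleP.
  have : (m - l) * (m + l - (M i0 i0 + M i1 i1)) = 0 by nra.
  case/Rmult_integral => ?; lra.
Qed.

Lemma n2E : ((2%:R)%R : R) = 2. Proof. rewrite -INRE /=. ring. Qed.
Lemma n4E : ((4%:R)%R : R) = 4. Proof. rewrite -INRE /=. ring. Qed.
Lemma halfE : ((- (1/2))%R : R) = - (1/2). Proof. by rewrite -RdivE -RoppE n2E. Qed.

Definition Sn t := sin (PI * t).
Definition Cs t := cos (PI * t).
Definition a11 t := 2 * (Sn t * Sn t) + Sn t - 13/2.
Definition a12 t := (6 - 4 * Sn t) * exp (6 / PI * Cs t).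
Definition a21 t := (6 + 7 * Sn t + 2 * (Sn t * Sn t)) * exp (- (6 / PI * Cs t)).
Definition a22 t := -13/2 - 4 * Sn t.

Definition Amat (t : R) : 'M[R]_2 :=
  (\matrix_(i < 2, j < 2)
    (if i == i0 then (if j == i0 then a11 t else a12 t)
     else (if j == i0 then a21 t else a22 t)))%R.

Lemma A00 t : Amat t i0 i0 = a11 t. Proof. by rewrite mxE. Qed.
Lemma A01 t : Amat t i0 i1 = a12 t. Proof. by rewrite mxE. Qed.
Lemma A10 t : Amat t i1 i0 = a21 t. Proof. by rewrite mxE. Qed.
Lemma A11 t : Amat t i1 i1 = a22 t. Proof. by rewrite mxE. Qed.

Lemma Sn_bound t : -1 <= Sn t <= 1. Proof. apply SIN_bound. Qed.
Lemma SC1 t : Sn t * Sn t + Cs t * Cs t = 1.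
Proof. have := sin2_cos2 (PI * t). rewrite /Rsqr /Sn /Cs. lra. Qed.

Lemma a12_pos t : 0 < a12 t.
Proof. have := Sn_bound t. rewrite /a12 => H. apply Rmult_lt_0_compat; [lra| apply exp_pos]. Qed.
Lemma a21_pos t : 0 < a21 t.
Proof. have := Sn_bound t. rewrite /a21 => H. apply Rmult_lt_0_compat; [nra| apply exp_pos]. Qed.

Lemma det_id t : (a11 t + 1/2) * (a22 t + 1/2) = a12 t * a21 t.
Proof.
rewrite /a11 /a12 /a21 /a22.
have E : exp (6 / PI * Cs t) * exp (- (6 / PI * Cs t)) = 1.
{ rewrite -exp_plus. replace (6 / PI * Cs t + - (6 / PI * Cs t)) with 0 by ring. apply exp_0. }
transitivity ((6 - 4 * Sn t) * (6 + 7 * Sn t + 2 * (Sn t * Sn t)) *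
   (exp (6 / PI * Cs t) * exp (- (6 / PI * Cs t)))); last ring.
rewrite E. field.
Qed.

Lemma tr_bound t : a11 t + a22 t < -1.
Proof. have := Sn_bound t. rewrite /a11 /a22 => H. nra. Qed.

Lemma cont_of_derive f : (forall x, ex_derive f x) -> continuity f.
Proof. move=> H x. apply/continuity_pt_filterlim. by apply: ex_derive_continuous. Qed.

Lemma Sn_per t : Sn (t + 2) = Sn t.
Proof. rewrite /Sn. replace (PI * (t + 2)) with (PI * t + 2 * INR 1 * PI) by (simpl; ring). apply sin_period. Qed.
Lemma Cs_per t : Cs (t + 2) = Cs t.
Proof. rewrite /Cs. replace (PI * (t + 2)) with (PI * t + 2 * INR 1 * PI) by (simpl; ring). apply cos_period. Qed.

Lemma Amat_per t : Amat (t + 2%:R)%R = Amat t.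
Proof.
rewrite -RplusE n2E. apply/matrixP => i j; rewrite !mxE.
by rewrite /a11 /a12 /a21 /a22 Sn_per Cs_per.
Qed.

Lemma Amat_cont i j : continuity (fun t => Amat t i j).
Proof.
case: (ord2_cases i) => ->; case: (ord2_cases j) => ->.
- apply: (continuity_eq (f := a11)); first by move=> t; rewrite A00.
  apply: cont_of_derive => x; rewrite /a11 /Sn; auto_derive; trivial.
- apply: (continuity_eq (f := a12)); first by move=> t; rewrite A01.
  apply: cont_of_derive => x; rewrite /a12 /Sn /Cs; auto_derive; trivial.
- apply: (continuity_eq (f := a21)); first by move=> t; rewrite A10.
  apply: cont_of_derive => x; rewrite /a21 /Sn /Cs; auto_derive; trivial.
- apply: (continuity_eq (f := a22)); first by move=> t; rewrite A11.
  apply: cont_of_derive => x; rewrite /a22 /Sn; auto_derive; trivial.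
Qed.

Definition atil (a : R -> R) (s : R) := a (Rmax 0 s).

Lemma Rmax_lip x y : Rabs (Rmax 0 y - Rmax 0 x) <= Rabs (y - x).
Proof. unfold Rmax; destruct (Rle_dec 0 y); destruct (Rle_dec 0 x); split_Rabs; lra. Qed.

Lemma atil_cont a : continuous_on_nonneg a -> forall x, continuous (atil a) x.
Proof.
move=> Ha x. apply/continuity_pt_filterlim. apply/continuity_pt_locally => eps.
have Hx : (0 <= Rmax 0 x)%R by apply/RleP; apply Rmax_l.
have He : (0 < (eps:R))%R by apply/RltP; apply cond_pos.
case: (Ha _ Hx _ He) => d [/RltP Hd Hd2].
exists (mkposreal d Hd) => y Hy.
have Hy' : Rabs (y - x) < d by exact Hy.
have Hs : (0 <= Rmax 0 y)%R by apply/RleP; apply Rmax_l.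
have Hl : (Rabs (Rmax 0 y - Rmax 0 x) < d)%R.
{ apply/RltP. have := Rmax_lip x y. lra. }
have := Hd2 _ Hs Hl. move/RltP. rewrite /atil. done.
Qed.

Definition Fint (a : R -> R) (t : R) := RInt (atil a) 0 t.

Lemma Fint_deriv a t : continuous_on_nonneg a -> is_derive (Fint a) t (atil a t).
Proof.
move=> Ha. apply: is_derive_RInt; last by apply: atil_cont.
apply: filter_forall => b. apply: RInt_correct. apply: ex_RInt_continuous => z _.
by apply: atil_cont.
Qed.

Lemma Fint_nonneg a t : continuous_on_nonneg a -> (forall s, 0 <= s -> 0 < a s) ->
  0 <= t -> 0 <= Fint a t.
Proof.
move=> Ha Hp Ht. apply: RInt_ge_0 => //.
- apply: ex_RInt_continuous => z _. by apply: atil_cont.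
- move=> x _. apply: Rlt_le. apply: Hp. apply Rmax_l.
Qed.

Definition phi1 t := 3 / PI * Cs t - / PI * (Sn t * Cs t).
Definition phi2 t := - (3 / PI) * Cs t - / PI * (Sn t * Cs t).
Definition dphi1 t := -3 * Sn t - Cs t * Cs t + Sn t * Sn t.
Definition dphi2 t := 3 * Sn t - Cs t * Cs t + Sn t * Sn t.
Definition G1 a t := Fint a t + (t / 2 + phi1 t).
Definition G2 a t := Fint a t + (t / 2 + phi2 t).

Lemma phi1_der t : is_derive (fun t => t / 2 + phi1 t) t (1/2 + dphi1 t).
Proof. rewrite /phi1 /dphi1 /Sn /Cs. auto_derive; trivial. field. apply PI_neq0. Qed.
Lemma phi2_der t : is_derive (fun t => t / 2 + phi2 t) t (1/2 + dphi2 t).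
Proof. rewrite /phi2 /dphi2 /Sn /Cs. auto_derive; trivial. field. apply PI_neq0. Qed.

Lemma is_derive_exp_comp g t dg : is_derive g t dg ->
  is_derive (fun x => exp (g x)) t (exp (g t) * dg).
Proof.
move=> H. have := is_derive_comp exp g t _ _ (is_derive_exp (g t)) H.
by rewrite /scal /= /mult /= Rmult_comm.
Qed.

Lemma G1_der a t : continuous_on_nonneg a ->
  is_derive (fun x => exp (G1 a x)) t (exp (G1 a t) * (atil a t + (1/2 + dphi1 t))).
Proof.
move=> Ha. apply: is_derive_exp_comp. rewrite /G1.
apply: (is_derive_plus (Fint a) (fun t => t / 2 + phi1 t)).
- by apply: Fint_deriv.
- by apply: phi1_der.
Qed.
Lemma G2_der a t : continuous_on_nonneg a ->
  is_derive (fun x => exp (G2 a x)) t (exp (G2 a t) * (atil a t + (1/2 + dphi2 t))).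
Proof.
move=> Ha. apply: is_derive_exp_comp. rewrite /G2.
apply: (is_derive_plus (Fint a) (fun t => t / 2 + phi2 t)).
- by apply: Fint_deriv.
- by apply: phi2_der.
Qed.

Lemma der_conv (f f' : R -> R) : (forall t, 0 <= t -> is_derive f t (f' t)) -> deriv_on_nonneg f f'.
Proof.
move=> H t /RleP Ht eps /RltP Heps.
have := proj1 (is_derive_Reals f t (f' t)) (H t Ht) eps Heps.
case=> delta Hd. exists (pos delta); split; first by apply/RltP; apply cond_pos.
move=> s _ Hst /RltP Hsd. apply/RltP.
have Hh : s - t <> 0 by lra.
have Hsd' : Rabs (s - t) < delta by exact Hsd.
have E : Rplus t (Rminus s t) = s.
{ by rewrite /Rminus Rplus_comm Rplus_assoc Rplus_opp_l Rplus_0_r. }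
have := Hd (s - t) Hh Hsd'. by rewrite E.
Qed.

Lemma G12 a t : exp (6 / PI * Cs t) * exp (G2 a t) = exp (G1 a t).
Proof. rewrite -exp_plus /G1 /G2 /phi1 /phi2. f_equal. field. apply PI_neq0. Qed.
Lemma G21 a t : exp (- (6 / PI * Cs t)) * exp (G1 a t) = exp (G2 a t).
Proof. rewrite -exp_plus /G1 /G2 /phi1 /phi2. f_equal. field. apply PI_neq0. Qed.

Definition vsol (a : R -> R) (t : R) : 'cV[R]_2 :=
  (\col_(i < 2) (if i == i0 then exp (G1 a t) else exp (G2 a t)))%R.

Lemma v0 a t : vsol a t i0 ord0 = exp (G1 a t). Proof. by rewrite mxE. Qed.
Lemma v1 a t : vsol a t i1 ord0 = exp (G2 a t). Proof. by rewrite mxE. Qed.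

Lemma Ahat_e (a : R -> R) t i j :
  (Amat t + (a t)%:M)%R i j = Amat t i j + ((a t)%:M : 'M[R]_2)%R i j.
Proof. by rewrite mxE. Qed.

Lemma Rnat_unb M : exists N : nat, M < INR N.
Proof.
destruct (archimed M) as [H _]. destruct (Z_le_gt_dec 0 (up M)) as [h|h].
- exists (Z.to_nat (up M)). rewrite INR_IZR_INZ Z2Nat.id //.
- exists 0%nat. simpl. have : IZR (up M) < IZR 0 by apply IZR_lt; lia. lra.
Qed.

Lemma is_derive_eqv (f : R -> R) t l l' : is_derive f t l -> l = l' -> is_derive f t l'.
Proof. by move=> H <-. Qed.

Ltac toR2 := toR; rewrite ?n2E ?n4E.

Lemma pe_shift (M : 'M[R]_2) t c :
  M i0 i0 = a11 t + c -> M i0 i1 = a12 t -> M i1 i0 = a21 t -> M i1 i1 = a22 t + c ->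
  principal_eigenvalue M (-(1/2) + c).
Proof.
move=> h00 h01 h10 h11. apply: principal_lemma; rewrite ?h00 ?h01 ?h10 ?h11.
- apply a12_pos.
- apply a21_pos.
- rewrite -det_id. ring.
- have := tr_bound t. lra.
Qed.

Lemma sol a : continuous_on_nonneg a ->
  solves_on_nonneg (fun t => Amat t + (a t)%:M)%R (vsol a).
Proof.
move=> Ha i. have HC t : Cs t * Cs t = 1 - Sn t * Sn t by have := SC1 t; lra.
case: (ord2_cases i) => ->; apply: der_conv => t Ht.
- apply: (is_derive_ext (fun x => exp (G1 a x))); first by move=> x; rewrite v0.
  apply: (is_derive_eqv (G1_der t Ha)).
  rewrite mulmx_c0 !Ahat_e A00 A01 scal_ii scal_01 v0 v1; toR.
  have E : atil a t = a t by rewrite /atil Rmax_right.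
  rewrite E -(G12 a t) /dphi1 /a11 /a12 HC.
  match goal with |- ?x = ?y => change (@eq R x y) end; field.
- apply: (is_derive_ext (fun x => exp (G2 a x))); first by move=> x; rewrite v1.
  apply: (is_derive_eqv (G2_der t Ha)).
  rewrite mulmx_c1 !Ahat_e A10 A11 scal_ii scal_10 v0 v1; toR.
  have E : atil a t = a t by rewrite /atil Rmax_right.
  rewrite E -(G21 a t) /dphi2 /a22 /a21 HC.
  match goal with |- ?x = ?y => change (@eq R x y) end; field.
Qed.

Lemma norm_lb a x : exp (G1 a x) <= norm2 (vsol a x).
Proof.
rewrite /norm2 v0 v1.
have H : sqrt (Rsqr (exp (G1 a x))) <= sqrt (Rsqr (exp (G1 a x)) + Rsqr (exp (G2 a x))).
{ apply sqrt_le_1_alt. have := Rle_0_sqr (exp (G2 a x)). lra. }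
rewrite sqrt_Rsqr in H; last by apply: Rlt_le; apply exp_pos.
exact H.
Qed.

Theorem mainTheorem3 :
  exists A : R -> 'M[R]_2,
    (forall i j : 'I_2, continuity (fun t => A t i j)) /\
    (forall t : R, A (t + 2)%R = A t) /\
    (forall t : R, offdiag_pos (A t)) /\
    (forall t : R, principal_eigenvalue (A t) (- (1/2))%R) /\
    forall a : R -> R,
      continuous_on_nonneg a ->
      (forall t : R, (0 <= t)%R -> (0 < a t < 1/4)%R) ->
      let Ahat := fun t => (A t + (a t)%:M)%R in
      (forall t : R, (0 <= t)%R ->
         offdiag_pos (Ahat t) /\
         principal_eigenvalue (Ahat t) (- (1/2) + a t)%R /\
         (- (1/2) + a t < - (1/4))%R) /\
      exists v : R -> 'cV[R]_2,
        solves_on_nonneg Ahat v /\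
        cv_infty (fun k : nat => norm2 (v (2 * INR k)%R)).
Proof.
exists Amat. split; first exact Amat_cont.
split; first exact Amat_per.
split.
{ move=> t; rewrite /offdiag_pos A01 A10; split; apply/RltP; [apply a12_pos|apply a21_pos]. }
split.
{ move=> t. rewrite halfE. replace (-(1/2)) with (-(1/2) + 0) by ring.
  apply: (pe_shift (t:=t)); rewrite ?A00 ?A01 ?A10 ?A11; ring. }
move=> a Ha Hb Ahat. split.
{ move=> t Ht. have := Hb t Ht. move/andP => [/RltP h1 /RltP h2].
  move: h2; toR2 => h2.
  split; [|split].
  - rewrite /offdiag_pos /Ahat !Ahat_e A01 A10 scal_01 scal_10; toR.
    split; apply/RltP; rewrite !Rplus_0_r; [apply a12_pos|apply a21_pos].
  - apply: (pe_shift (t:=t)); rewrite /Ahat !Ahat_e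
      ?A00 ?A01 ?A10 ?A11 ?scal_ii ?scal_01 ?scal_10; toR; ring.
  - apply/RltP. toR2. lra. }
exists (vsol a). split; first exact: sol.
have Hp : forall s, 0 <= s -> 0 < a s.
{ move=> s hs. have hs' : (0 <= s)%R by apply/RleP.
  by move: (Hb s hs') => /andP [/RltP h _]. }
move=> M. case: (Rnat_unb M) => N HN. exists N => n Hn.
rewrite -RmultE n2E.
apply: Rlt_le_trans (norm_lb a _).
have HF := Fint_nonneg (t:=2 * INR n) Ha Hp.
have Hn0 : 0 <= 2 * INR n by have := pos_INR n; lra.
have HNn := le_INR _ _ Hn.
have Hph : 0 < phi1 (2 * INR n).
{ rewrite /phi1 /Sn /Cs.
  replace (PI * (2 * INR n)) with (0 + 2 * INR n * PI) by ring.
  rewrite sin_period cos_period sin_0 cos_0.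
  have := PI_RGT_0. move=> hp. 
  replace (3 / PI * 1 - / PI * (0 * 1)) with (3 / PI) by (field; lra).
  apply Rdiv_lt_0_compat; lra. }
have := exp_ineq1_le (G1 a (2 * INR n)). rewrite /G1.
have := HF Hn0. lra.
Qed.
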